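(* Let $(\mathcal{K},[\cdot,\cdot])$ be a Krein space with canonical decomposition $\mathcal{K}=\mathcal{K}^+\oplus\mathcal{K}^-$, and let $\{f_n\}_{n\in I}$, $I=I_+\sqcup I_-$, be a Riesz basis for $(\mathcal{K},[\cdot,\cdot])$ with $f_n=U^+e_n$ for $n\in I_+$ and $f_n=U^-e_n$ for $n\in I_-$, where $\{e_n\}_{n\in I_+}$ is an orthonormal basis of $\mathcal{K}^+$, $\{e_n\}_{n\in I_-}$ is an orthonormal basis of $\mathcal{K}^-$, and $U^+:\mathcal{K}^+\to\mathcal{K}^+$, $U^-:\mathcal{K}^-\to\mathcal{K}^-$ are bounded bijective linear operators. Then there exist positive constants $A,B,A',B'$ such that \[A\|f\|^2\le\sum_{n\in I_+}|[f,f_n]|^2\le B\|f\|^2\quad\text{for all } f\in\mathcal{K}^+\] and \[A'\|f\|^2\le\sum_{n\in I_-}|[f,f_n]|^2\le B'\|f\|^2\quad\text{for all } f\in\mathcal{K}^-.\] Moreover, the largest possible values of $A$ and $A'$ are $\frac{1}{\|(U^+)^{-1}\|^2}$ and $\frac{1}{\|(U^-)^{-1}\|^2}$ respectively, and the smallest possible values of $B$ and $B'$ are $\|U^+\|^2$ and $\|U^-\|^2$ respectively.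
   Context: A Krein space $(\mathcal{K},[\cdot,\cdot])$ is a vector space with a Hermitian sesquilinear (indefinite) form $[\cdot,\cdot]$ admitting a $[\cdot,\cdot]$-orthogonal direct sum decomposition $\mathcal{K}=\mathcal{K}^+\oplus\mathcal{K}^-$ such that $(\mathcal{K}^+,[\cdot,\cdot])$ and $(\mathcal{K}^-,-[\cdot,\cdot])$ are Hilbert spaces. The norm on $\mathcal{K}^+$ is $\|x\|=[x,x]^{1/2}$ and on $\mathcal{K}^-$ is $\|x\|=(-[x,x])^{1/2}$. Orthonormal bases, adjoints and operator norms on $\mathcal{K}^\pm$ are taken with respect to these Hilbert space structures. *)

(* Defs.v *)
From mathcomp Require Import all_boot all_order all_algebra.
From mathcomp Require Import all_classical all_reals all_analysis.
From mathcomp Require Export complex.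
Set Implicit Arguments. Unset Strict Implicit. Unset Printing Implicit Defensive.
Import Order.TTheory GRing.Theory Num.Theory.
Local Open Scope ring_scope.
Local Open Scope classical_set_scope.

Section KreinDefs.
Variables (R : realType) (V : lmodType R[i]).

Definition k_subspace (S : set V) : Prop :=
  S 0 /\ (forall (a : R[i]) x y, S x -> S y -> S (a *: x + y)).

Definition k_hermitian_sesquilinear (form : V -> V -> R[i]) : Prop :=
  (forall (a : R[i]) x y z, form (a *: x + y) z = a * form x z + form y z) /\
  (forall x y, form y x = (form x y)^*).

(* The norm attached to the form: sqrt |[x,x]|; on K+ this is [x,x]^(1/2),
   on K- it is (-[x,x])^(1/2). *)
Definition k_norm (form : V -> V -> R[i]) (x : V) : R := Num.sqrt (Normc.normc (form x x)).

Definition k_complete_wrt (S : set V) (nrm : V -> R) : Prop :=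
  forall u : nat -> V, (forall k, S (u k)) ->
    (forall e : R, 0 < e -> exists N, forall m n, (N <= m)%N -> (N <= n)%N ->
        nrm (u m - u n) < e) ->
    exists2 x, S x & forall e : R, 0 < e -> exists N, forall n, (N <= n)%N ->
        nrm (u n - x) < e.

Definition k_hilbert_on (S : set V) (ip : V -> V -> R[i]) : Prop :=
  k_subspace S /\ (forall x, S x -> x != 0 -> 0 < ip x x) /\ k_complete_wrt S (k_norm ip).

Definition k_krein_space (form : V -> V -> R[i]) (Kp Km : set V) : Prop :=
  k_hermitian_sesquilinear form /\
  (forall x, exists xp xm, [/\ Kp xp, Km xm & x = xp + xm]) /\
  (forall x, Kp x -> Km x -> x = 0) /\
  (forall x y, Kp x -> Km y -> form x y = 0) /\
  k_hilbert_on Kp form /\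
  k_hilbert_on Km (fun x y => - form x y) /\
  (* the form is indefinite: both components are nontrivial *)
  (exists2 x, Kp x & x != 0) /\ (exists2 x, Km x & x != 0).

Definition k_orthonormal_basis (I : eqType) (S : set V) (ip : V -> V -> R[i])
    (e : I -> V) : Prop :=
  (forall n, S (e n)) /\
  (forall n m, ip (e n) (e m) = (n == m)%:R) /\
  (forall x, S x -> (forall n, ip x (e n) = 0) -> x = 0).

Definition k_bounded_linear_on (S : set V) (nrm : V -> R) (T : V -> V) : Prop :=
  (forall x, S x -> S (T x)) /\
  (forall (a : R[i]) x y, S x -> S y -> T (a *: x + y) = a *: T x + T y) /\
  (exists c : R, forall x, S x -> nrm (T x) <= c * nrm x).

Definition k_bijective_on (S : set V) (T : V -> V) : Prop :=
  (forall x y, S x -> S y -> T x = T y -> x = y) /\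
  (forall y, S y -> exists2 x, S x & T x = y).

Definition k_inverse_on (S : set V) (T Ti : V -> V) : Prop :=
  (forall y, S y -> S (Ti y)) /\
  (forall x, S x -> Ti (T x) = x) /\ (forall y, S y -> T (Ti y) = y).

Definition k_opnorm (S : set V) (nrm : V -> R) (T : V -> V) : R :=
  sup [set r | exists2 x, S x /\ nrm x <= 1 & r = nrm (T x)].

Definition k_coef_sum (I : choiceType) (form : V -> V -> R[i]) (g : I -> V) (f : V)
  : \bar R := \esum_(n in [set: I]) ((Normc.normc (form f (g n))) ^+ 2)%:E.

Definition k_lower_bound_on (S : set V) (nrm : V -> R) (sm : V -> \bar R) (A : R) :=
  forall f, S f -> ((A * nrm f ^+ 2)%:E <= sm f)%E.
Definition k_upper_bound_on (S : set V) (nrm : V -> R) (sm : V -> \bar R) (B : R) :=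
  forall f, S f -> (sm f <= (B * nrm f ^+ 2)%:E)%E.

End KreinDefs.

(* Main.v *)
Require Import Defs.
From mathcomp Require Import all_boot all_order all_algebra.
From mathcomp Require Import all_classical all_reals all_analysis.
From mathcomp Require Import complex.
From mathcomp Require Import ring lra zify.
Import Order.TTheory GRing.Theory Num.Theory.
Local Open Scope ring_scope.
Local Open Scope classical_set_scope.

Lemma normcC (R : realType) (z : R[i]) : (Normc.normc z)%:C%C = `|z|.
Proof. by case: z => a b; rewrite normc_def. Qed.

Lemma normc_ge0' (R : realType) (z : R[i]) : 0 <= Normc.normc z.
Proof. by rewrite -(lecR 0) normcC; exact: normr_ge0. Qed.


Lemma sum_delta (T : eqType) (K : pzRingType) (s : seq T) (F : T -> K) i :
  uniq s -> \sum_(j <- s) F j * (i == j)%:R = if i \in s then F i else 0.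
Proof.
elim: s => [|a s IH]; first by rewrite big_nil.
rewrite big_cons /= in_cons => /andP[ans us]; rewrite IH //.
have [->|nia] := eqVneq i a; last by rewrite mulr0 add0r.
by rewrite mulr1 /= (negbTE ans) addr0.
Qed.

Lemma sqr_inj_ge0 (R : realType) (p q : R) : 0 <= p -> 0 <= q -> p ^+ 2 = q ^+ 2 -> p = q.
Proof.
move=> p0 q0 /eqP; rewrite eqrXn2 //. by move/eqP.
Qed.


Lemma pow2_ge (R : realType) k : (k.+1)%:R <= (2 : R) ^+ k.
Proof.
elim: k => [|k IH]; first by rewrite expr0.
rewrite exprS; apply: le_trans (_ : 2 * (k.+1)%:R <= _).
  by rewrite -natrM ler_nat; lia.
by rewrite ler_pM2l.
Qed.

Lemma small_geom (R : realType) (c eps : R) : 0 < eps -> exists k, c / 2 ^+ k < eps.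
Proof.
move=> e0; have [c0|c0] := leP c 0.
  exists 0%N; rewrite expr0 divr1; exact: le_lt_trans c0 e0.
exists (Num.truncn (c / eps)).
have h1 := truncnS_gt (c / eps).
rewrite ltr_pdivrMr ?exprn_gt0 //.
rewrite -ltr_pdivrMl // mulrC; apply: lt_le_trans h1 _.
apply: le_trans (pow2_ge _ _); exact: lexx.
Qed.


Lemma sum_sub_le (T : eqType) (K : numDomainType) (s t : seq T) (F : T -> K) :
  uniq s -> uniq t -> {subset s <= t} -> (forall i, 0 <= F i) ->
  \sum_(i <- s) F i <= \sum_(i <- t) F i.
Proof.
move=> us ut st F0.
have p0 : perm_eq (seq.filter (mem s) t ++ seq.filter (predC (mem s)) t) t.
  exact: permEl (perm_filterC _ _).
rewrite -(perm_big _ p0) big_cat /=.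
have p : perm_eq s (seq.filter (mem s) t).
  apply: uniq_perm => //; first exact: filter_uniq.
  by move=> i; rewrite mem_filter /=; case si: (i \in s) => //; rewrite (st _ si).
by rewrite (perm_big _ p) lerDl sumr_ge0.
Qed.

Lemma zero_geom (R : realType) (r c : R) : 0 <= r -> (forall k, r <= c / 2 ^+ k) -> r = 0.
Proof.
move=> r0 h; apply/eqP; rewrite eq_le r0 andbT; apply: contraT; rewrite -ltNge => rp.
have [k hk] := @small_geom _ c _ rp.
by have := lt_le_trans hk (h k); rewrite ltxx.
Qed.


Lemma le0_eps (R : realType) (x c : R) : 0 <= c ->
  (forall eps, 0 < eps -> x <= c * eps) -> x <= 0.
Proof.
move=> c0 h; apply/ler_addgt0Pr => eps e0; rewrite add0r.
have c1 : 0 < c + 1 by lra.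
apply: le_trans (h (eps / (c + 1)) _) _; first by rewrite divr_gt0.
rewrite mulrA ler_pdivrMr // mulrC ler_pM2l //; lra.
Qed.

Lemma normc_real (R : realType) (r : R) : 0 <= r -> Normc.normc (r%:C%C) = r.
Proof. by move=> r0; apply: complexI; rewrite normcC ger0_norm // lecR. Qed.


Section ESum.
Variables (R : realType) (I : choiceType) (g : I -> R).
Hypothesis g0 : forall i, 0 <= g i.

Lemma es_ub (c : R) : (forall s, uniq s -> \sum_(i <- s) g i <= c) ->
  (\esum_(n in [set: I]) (g n)%:E <= c%:E)%E.
Proof.
move=> h; apply: ge_ereal_sup => _ [X [finX _] <-].
rewrite fsbig_finite // sumEFin lee_fin; apply: h; exact: finmap.fset_uniq.
Qed.

Lemma es_lb s : uniq s -> ((\sum_(i <- s) g i)%:E <= \esum_(n in [set: I]) (g n)%:E)%E.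
Proof.
move=> us; apply: esum_ge; exists [set` s]; first by split => //; exact: finite_seq.
rewrite fsbig_finite ?finite_seq // sumEFin lee_fin le_eqVlt; apply/orP; left; apply/eqP.
apply: perm_big; apply: uniq_perm; [exact: us | exact: finmap.fset_uniq | move=> i].
rewrite (in_fset_set (finite_seq s)); apply/idP/idP => h; [exact/mem_set | exact: (set_mem h)].
Qed.

Lemma es_lb2 (L : R) : (forall Fr, (forall s, uniq s -> \sum_(i <- s) g i <= Fr) -> L <= Fr) ->
  (L%:E <= \esum_(n in [set: I]) (g n)%:E)%E.
Proof.
move=> h.
have e0 : (0 <= \esum_(n in [set: I]) (g n)%:E)%E by apply: esum_ge0 => i _; rewrite lee_fin.
case E : (\esum_(n in [set: I]) (g n)%:E) => [r| |]; last by rewrite E in e0.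
  rewrite lee_fin; apply: h => s us; rewrite -lee_fin -E; exact: es_lb.
by rewrite leey.
Qed.

End ESum.

Section Gen.
Variables (R : realType) (V : lmodType R[i]) (ip : V -> V -> R[i]) (S : set V).
Hypothesis ipL : forall a x y z, ip (a *: x + y) z = a * ip x z + ip y z.
Hypothesis ipC : forall x y, ip y x = (ip x y)^*.
Hypothesis S0 : S 0.
Hypothesis SL : forall a x y, S x -> S y -> S (a *: x + y).
Hypothesis Spos : forall x, S x -> x != 0 -> 0 < ip x x.

Local Notation N := (k_norm ip).

Lemma ip0l z : ip 0 z = 0.
Proof.
have := ipL 1 0 0 z; rewrite scale1r addr0 mul1r => /eqP.
by rewrite -subr_eq0 opprD addrA subrr add0r oppr_eq0 => /eqP.
Qed.
Lemma ipDl x y z : ip (x + y) z = ip x z + ip y z.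
Proof. by rewrite -[x]scale1r ipL mul1r scale1r. Qed.
Lemma ipZl a x z : ip (a *: x) z = a * ip x z.
Proof. by rewrite -[a *: x]addr0 ipL ip0l addr0. Qed.
Lemma ipNl x z : ip (- x) z = - ip x z.
Proof. by rewrite -scaleN1r ipZl mulN1r. Qed.
Lemma ipBl x y z : ip (x - y) z = ip x z - ip y z.
Proof. by rewrite ipDl ipNl. Qed.
Lemma ip0r z : ip z 0 = 0.
Proof. by rewrite ipC ip0l conjC0. Qed.
Lemma ipDr x y z : ip z (x + y) = ip z x + ip z y.
Proof. by rewrite !(ipC _ z) ipDl rmorphD. Qed.
Lemma ipZr a x z : ip z (a *: x) = a^* * ip z x.
Proof. by rewrite !(ipC _ z) ipZl rmorphM. Qed.
Lemma ipNr x z : ip z (- x) = - ip z x.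
Proof. by rewrite !(ipC _ z) ipNl rmorphN. Qed.
Lemma ipBr x y z : ip z (x - y) = ip z x - ip z y.
Proof. by rewrite ipDr ipNr. Qed.
Lemma ip_sumL (I : Type) (s : seq I) (F : I -> V) z :
  ip (\sum_(i <- s) F i) z = \sum_(i <- s) ip (F i) z.
Proof.
elim: s => [|a s IH]; first by rewrite !big_nil ip0l.
by rewrite !big_cons ipDl IH.
Qed.
Lemma ip_sumR (I : Type) (s : seq I) (F : I -> V) z :
  ip z (\sum_(i <- s) F i) = \sum_(i <- s) ip z (F i).
Proof.
elim: s => [|a s IH]; first by rewrite !big_nil ip0r.
by rewrite !big_cons ipDr IH.
Qed.

Lemma SD {x y} : S x -> S y -> S (x + y).
Proof. by move=> ? ?; rewrite -[x]scale1r; apply: SL. Qed.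
Lemma SZ a {x} : S x -> S (a *: x).
Proof. by move=> ?; rewrite -[_ *: _]addr0; apply: SL. Qed.
Lemma SN {x} : S x -> S (- x).
Proof. by move=> ?; rewrite -scaleN1r; apply: SZ. Qed.
Lemma SB {x y} : S x -> S y -> S (x - y).
Proof. by move=> ? ?; apply: SD => //; apply: SN. Qed.
Lemma Ssum (I : Type) (s : seq I) (F : I -> V) :
  (forall i, S (F i)) -> S (\sum_(i <- s) F i).
Proof.
move=> HF; elim: s => [|a s IH]; first by rewrite big_nil.
by rewrite big_cons; apply: SD.
Qed.

Lemma ipxx_ge0 {x} : S x -> 0 <= ip x x.
Proof.
move=> Sx; have [->|nz] := eqVneq x 0; first by rewrite ip0l.
exact/ltW/Spos.
Qed.

Lemma N_ge0 x : 0 <= N x.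
Proof. exact: sqrtr_ge0. Qed.

Lemma NsqC {x} : S x -> ((N x) ^+ 2)%:C%C = ip x x.
Proof.
move=> Sx; rewrite /k_norm sqr_sqrtr ?normc_ge0' // normcC.
by rewrite ger0_norm // ipxx_ge0.
Qed.

Lemma N0 : N 0 = 0.
Proof. by rewrite /k_norm ip0l Normc.normc0 sqrtr0. Qed.

Lemma N_eq0 {x} : S x -> N x = 0 -> x = 0.
Proof.
move=> Sx Nx; apply/eqP; apply: contraT => nz.
have := Spos x Sx nz; rewrite -NsqC // Nx expr0n /=.
by rewrite ltxx.
Qed.

Lemma CS_C {x y} : S x -> S y -> `|ip x y| ^+ 2 <= ip x x * ip y y.
Proof.
move=> Sx Sy.
have [->|ny] := eqVneq y 0; first by rewrite ip0r normr0 expr0n /= ip0r mulr0.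
set B := ip y y; set c := ip x y.
have Bp : 0 < B by apply: Spos.
have BR : B^* = B by apply/CrealP; rewrite realE ltW.
pose t := c / B.
have := ipxx_ge0 (SB Sx (SZ t Sy)).
rewrite !ipBl !ipBr !ipZl !ipZr -/B -/c.
rewrite (ipC x y) -/c.
have -> : ip x x - t^* * c - (t * c^* - t * (t^* * B)) = ip x x - `|c| ^+ 2 / B.
  rewrite /t normCK rmorphM rmorphV ?unitfE ?gt_eqF //= BR.
  field. by rewrite gt_eqF.
rewrite subr_ge0 => H.
by rewrite -(ler_pM2r Bp) mulfVK ?gt_eqF // in H.
Qed.

Lemma CS {x y} : S x -> S y -> Normc.normc (ip x y) <= N x * N y.
Proof.
move=> Sx Sy.
rewrite -(@ler_pXn2r _ 2) //; last by rewrite nnegrE mulr_ge0 ?N_ge0.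
  rewrite -lecR rmorphXn /= normcC exprMn rmorphM /= !NsqC //.
  exact: CS_C.
by rewrite nnegrE normc_ge0'.
Qed.


Lemma N_Z a {x} : S x -> N (a *: x) = Normc.normc a * N x.
Proof.
move=> Sx; apply: sqr_inj_ge0; rewrite ?mulr_ge0 ?normc_ge0' ?N_ge0 //.
apply: complexI; rewrite (NsqC (SZ a Sx)) ipZl ipZr exprMn rmorphM /= NsqC //.
rewrite mulrA; congr (_ * _); rewrite rmorphXn /= normcC normCK mulrC //.
Qed.

Lemma N_N {x} : S x -> N (- x) = N x.
Proof. by move=> Sx; rewrite -scaleN1r N_Z // normcN Normc.normc1 mul1r. Qed.

Lemma N_sym {x y} : S x -> S y -> N (x - y) = N (y - x).
Proof. by move=> Sx Sy; rewrite -(N_N (SB Sx Sy)) opprB. Qed.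

Lemma cc_le (c : R[i]) : c + c^* <= (Normc.normc c)%:C%C *+ 2.
Proof.
have -> : c + c^* = (complex.Re c)%:C%C *+ 2.
  have -> : c^* = c^*%C by [].
  by rewrite ReJ_add -mulr_natl; field.
rewrite lerMn2r /= lecR.
apply: le_trans (ler_norm _) _.
by rewrite -lecR normcC; apply: normc_ge_Re.
Qed.

Lemma N_D {x y} : S x -> S y -> N (x + y) <= N x + N y.
Proof.
move=> Sx Sy.
rewrite -(@ler_pXn2r _ 2) //; last by rewrite nnegrE addr_ge0 ?N_ge0.
  rewrite -lecR (NsqC (SD Sx Sy)) ipDl !ipDr (ipC x y).
  have CSR := CS Sx Sy.
  rewrite sqrrD rmorphD rmorphD /= NsqC // rmorphMn /= NsqC //.
  rewrite addrA lerD2r -addrA lerD2l.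
  apply: le_trans (cc_le _) _.
  by rewrite lerMn2r /= lecR.
by rewrite nnegrE N_ge0.
Qed.

Lemma N_B {x y} : S x -> S y -> N (x - y) <= N x + N y.
Proof. by move=> Sx Sy; rewrite -(N_N Sy); apply: N_D => //; apply: SN. Qed.

Lemma ip_cont {x y z} : S x -> S y -> S z ->
  Normc.normc (ip x z - ip y z) <= N (x - y) * N z.
Proof. by move=> Sx Sy Sz; rewrite -ipBl; apply: CS => //; apply: SB. Qed.

Lemma ip_cont_r {x y z} : S x -> S y -> S z ->
  Normc.normc (ip z x - ip z y) <= N z * N (x - y).
Proof. by move=> Sx Sy Sz; rewrite -ipBr; apply: CS => //; apply: SB. Qed.


Lemma normc2C (z : R[i]) : ((Normc.normc z) ^+ 2)%:C%C = z * z^*.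
Proof. by rewrite rmorphXn /= normcC normCK. Qed.

Variables (I : choiceType) (e : I -> V).
Hypothesis He : forall n, S (e n).
Hypothesis Hon : forall n m, ip (e n) (e m) = (n == m)%:R.
Hypothesis Hmax : forall x, S x -> (forall n, ip x (e n) = 0) -> x = 0.

Definition osum (s : seq I) (a : I -> R[i]) := \sum_(i <- s) a i *: e i.

Lemma S_osum s a : S (osum s a).
Proof. by apply: Ssum => i; apply: SZ. Qed.

Lemma ip_osum_e s a m : uniq s -> ip (osum s a) (e m) = if m \in s then a m else 0.
Proof.
move=> us; rewrite /osum ip_sumL.
under eq_bigr do rewrite ipZl Hon eq_sym.
by rewrite sum_delta.
Qed.

Lemma ip_e_osum s a m : uniq s -> ip (e m) (osum s a) = if m \in s then (a m)^* else 0.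
Proof.
move=> us; rewrite ipC ip_osum_e //; case: ifP => // _; exact: conjC0.
Qed.

Lemma ip_osum s a b : uniq s -> ip (osum s a) (osum s b) = \sum_(i <- s) a i * (b i)^*.
Proof.
move=> us; rewrite {1}/osum ip_sumL big_seq_cond [RHS]big_seq_cond.
apply: eq_bigr => i /andP[si _]; rewrite ipZl ip_e_osum // si //.
Qed.

Lemma N_osum s a : uniq s -> N (osum s a) ^+ 2 = \sum_(i <- s) (Normc.normc (a i)) ^+ 2.
Proof.
move=> us; apply: complexI; rewrite (NsqC (S_osum s a)) ip_osum // raddf_sum /=.
by apply: eq_bigr => i _; rewrite normc2C.
Qed.

Lemma bessel g s : S g -> uniq s ->
  \sum_(i <- s) (Normc.normc (ip g (e i))) ^+ 2 <= N g ^+ 2.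
Proof.
move=> Sg us; set a := fun i => ip g (e i).
have Sy := S_osum s a.
have := ipxx_ge0 (SB Sg Sy).
rewrite !ipBl !ipBr ip_osum //.
have -> : ip (osum s a) g = \sum_(i <- s) a i * (a i)^*.
  rewrite /osum ip_sumL; apply: eq_bigr => i _; by rewrite ipZl -ipC.
have -> : ip g (osum s a) = \sum_(i <- s) a i * (a i)^*.
  rewrite ipC; rewrite /osum ip_sumL rmorph_sum; apply: eq_bigr => i _.
  by rewrite ipZl rmorphM /= -ipC mulrC.
rewrite subrr subr0 subr_ge0 -NsqC // -lecR raddf_sum /=.
move=> H; apply: le_trans H; under eq_bigr do rewrite normc2C; done.
Qed.


Hypothesis Hcomp : k_complete_wrt S N.

Lemma N_tri3 {x y z} : S x -> S y -> S z -> N (x - z) <= N (x - y) + N (y - z).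
Proof.
move=> Sx Sy Sz; have -> : x - z = (x - y) + (y - z) by rewrite addrA subrK.
by apply: N_D; apply: SB.
Qed.

Lemma geom (u : nat -> V) (d : nat -> R) :
  (forall j, S (u j)) -> (forall j, d j.+1 <= d j / 2) ->
  (forall j, N (u j.+1 - u j) <= d j) ->
  exists2 y, S y & forall j, N (u j - y) <= 2 * d j.
Proof.
move=> Su hd hu.
have d0 j : 0 <= d j by apply: le_trans (hu j); apply: N_ge0.
have dpow j i : d (j + i)%N <= d j / 2 ^+ i.
  elim: i => [|i IH]; first by rewrite addn0 expr0 divr1.
  rewrite addnS; apply: le_trans (hd _) _.
  have -> : d j / 2 ^+ i.+1 = (d j / 2 ^+ i) / 2.
    by rewrite exprS invfM; ring.
  by rewrite ler_pM2r ?invr_gt0.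
have tel j i : N (u (j + i)%N - u j) <= 2 * d j - 2 * d (j + i)%N.
  elim: i => [|i IH]; first by rewrite addn0 subrr N0 subrr.
  apply: le_trans (N_tri3 (Su _) (Su (j + i)%N) (Su _)) _.
  rewrite addnS; have := hu (j + i)%N; have := hd (j + i)%N => h1 h2.
  lra.
have far j n : (j <= n)%N -> N (u n - u j) <= 2 * d j.
  move=> jn; rewrite -(subnKC jn); apply: le_trans (tel _ _) _.
  by rewrite lerBlDr lerDl mulr_ge0.
have [y Sy cy] : exists2 y, S y & forall eps : R, 0 < eps -> exists M, forall n, (M <= n)%N -> N (u n - y) < eps.
  apply: Hcomp => // eps e0.
  have [k hk] := @small_geom _ (4 * d 0%N) _ e0.
  exists k => m n km kn.
  apply: le_lt_trans (N_tri3 (Su m) (Su k) (Su n)) _.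
  rewrite (N_sym (Su k) (Su n)).
  have h1 := far _ _ km; have h2 := far _ _ kn; have h3 := dpow 0%N k.
  rewrite add0n in h3.
  apply: le_lt_trans hk; rewrite -mulrA; lra.
exists y => // j; apply/ler_addgt0Pr => eps e0.
have [M hM] := cy eps e0.
have := hM (maxn M j) (leq_maxl _ _).
have := far j (maxn M j) (leq_maxr _ _).
rewrite (N_sym (Su (maxn M j)) (Su j)) => h1 h2.
apply: le_trans (N_tri3 (Su j) (Su (maxn M j)) Sy) _.
lra.
Qed.


Lemma N_e m : N (e m) = 1.
Proof. by rewrite /k_norm Hon eqxx Normc.normc1 sqrtr1. Qed.

Lemma osum_cat s t a : osum (s ++ t) a = osum s a + osum t a.
Proof. by rewrite /osum big_cat. Qed.

Lemma synth (a : I -> R[i]) (C : R) :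
  (forall s, uniq s -> \sum_(i <- s) (Normc.normc (a i)) ^+ 2 <= C) ->
  exists y, [/\ S y, (forall m, ip y (e m) = a m) &
    (forall eps : R, 0 < eps -> exists2 s, uniq s & N (y - osum s a) < eps)].
Proof.
move=> hC.
set sq := fun i => (Normc.normc (a i)) ^+ 2.
have sq0 i : 0 <= sq i by rewrite /sq exprn_ge0 // normc_ge0'.
pose T := [set r | exists2 s, uniq s & r = \sum_(i <- s) sq i].
have hT : has_sup T.
  split; first by exists 0; exists [::]; rewrite ?big_nil.
  by exists C => r [s us ->]; apply: hC.
set sp := sup T.
pose d k := (2 ^+ k : R)^-1.
have d0 k : 0 < d k by rewrite /d invr_gt0 exprn_gt0.
have hd k : d k.+1 <= d k / 2 by rewrite /d exprS invfM mulrC.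
have hex : forall k, exists s, uniq s /\ sp - d k ^+ 2 < \sum_(i <- s) sq i.
  move=> k; have [r [s us ->] hr] := sup_adherent (exprn_gt0 2 (d0 k)) hT.
  by exists s.
have [sk hsk] := choice hex.
pose fix G k := if k is k'.+1 then G k' ++ seq.filter (fun i => i \notin G k') (sk k) else sk 0%N.
have uG k : uniq (G k).
  elim: k => [|k IH] /=; first by case: (hsk 0%N).
  rewrite cat_uniq IH filter_uniq ?andbT; last by case: (hsk k.+1).
  by apply/hasPn => i; rewrite mem_filter => /andP[].
have skG k : {subset sk k <= G k}.
  case: k => [|k] i ski //=; rewrite mem_cat mem_filter ski andbT.
  by case: (i \in G k).
have Gle k : \sum_(i <- G k) sq i <= sp.
  by apply: sup_upper_bound => //; exists (G k).
have Ggt k : sp - d k ^+ 2 < \sum_(i <- G k) sq i.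
  apply: lt_le_trans (proj2 (hsk k)) _.
  apply: sum_sub_le; [by case: (hsk k) | exact: uG | exact: skG | exact: sq0].
pose u k := osum (G k) a.
have Su k : S (u k) by apply: S_osum.
have hu k : N (u k.+1 - u k) <= d k.
  rewrite /u /= osum_cat addrC addKr.
  set t := seq.filter _ _.
  have ut : uniq t by rewrite filter_uniq //; case: (hsk k.+1).
  rewrite -(@ler_pXn2r _ 2) // ?nnegrE ?N_ge0 ?(ltW (d0 k)) // N_osum //.
  have := Gle k.+1; rewrite /= big_cat /=.
  have := Ggt k; rewrite -/t; lra.
have [y Sy hy] := geom u d Su hd hu.
exists y; split => //.
  move=> m; apply/eqP; rewrite -subr_eq0; apply/eqP/Normc.eq0_normc.
  apply: (@zero_geom _ _ 3); first exact: normc_ge0'.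
  move=> k.
  have h1 : Normc.normc (ip (u k) (e m) - a m) <= d k.
    rewrite ip_osum_e //; case: ifP => mG; first by rewrite subrr Normc.normc0 ltW.
    rewrite sub0r normcN -(@ler_pXn2r _ 2) // ?nnegrE ?normc_ge0' ?(ltW (d0 k)) //.
    have u' : uniq (m :: G k) by rewrite /= mG uG.
    have := sup_upper_bound hT (ex_intro2 _ _ (m :: G k) u' erefl).
    rewrite big_cons -/sp => h2; have := Ggt k; rewrite /sq in h2 *; lra.
  have h2 := ip_cont Sy (Su k) (He m); rewrite N_e mulr1 in h2.
  have h3 : N (y - u k) <= 2 * d k by rewrite (N_sym Sy (Su k)); apply: hy.
  have -> : ip y (e m) - a m = (ip y (e m) - ip (u k) (e m)) + (ip (u k) (e m) - a m).
    by rewrite addrA subrK.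
  apply: le_trans (le_normcD _ _) _.
  have -> : 3 / 2 ^+ k = 3 * d k by [].
  lra.
move=> eps e0.
have [k hk] := @small_geom _ 2 _ e0.
exists (G k) => //; rewrite (N_sym Sy (Su k)).
by apply: le_lt_trans (hy k) _.
Qed.


Lemma expand {g} : S g -> forall eps : R, 0 < eps ->
  exists2 s, uniq s & N (g - osum s (fun i => ip g (e i))) < eps.
Proof.
move=> Sg eps e0.
have [y [Sy hy ha]] := @synth (fun i => ip g (e i)) (N g ^+ 2) (fun s us => bessel _ _ Sg us).
suff gy : g = y.
  have [s us hs] := ha eps e0; exists s => //; by rewrite {1}gy.
apply/eqP; rewrite -subr_eq0; apply/eqP; apply: Hmax; first exact: SB.
by move=> n; rewrite ipBl hy subrr.
Qed.

Lemma riesz (phi : V -> R[i]) (M : R) :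
  (forall a x y, S x -> S y -> phi (a *: x + y) = a * phi x + phi y) ->
  (forall x, S x -> Normc.normc (phi x) <= M * N x) ->
  exists2 k, S k & forall v, S v -> phi v = ip v k.
Proof.
move=> phiL phiB.
have phi0 : phi 0 = 0.
  have := phiL 1 0 0 S0 S0; rewrite scale1r addr0 mul1r => /eqP.
  by rewrite -subr_eq0 opprD addrA subrr add0r oppr_eq0 => /eqP.
have phiD x y : S x -> S y -> phi (x + y) = phi x + phi y.
  by move=> Sx Sy; have := phiL 1 x y Sx Sy; rewrite scale1r mul1r.
have phiZ b x : S x -> phi (b *: x) = b * phi x.
  by move=> Sx; have := phiL b x 0 Sx S0; rewrite addr0 phi0 addr0.
have phi_osum s b : phi (osum s b) = \sum_(i <- s) b i * phi (e i).
  elim: s => [|i s IH]; first by rewrite /osum !big_nil phi0.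
  rewrite /osum !big_cons phiD; last exact: S_osum.
    by rewrite phiZ // -/(osum s b) IH.
  exact: SZ.
set a := fun i => (phi (e i))^*.
have bd : forall s, uniq s -> \sum_(i <- s) (Normc.normc (a i)) ^+ 2 <= M ^+ 2.
  move=> s0 us; rewrite -N_osum //.
  set x := osum s0 a.
  have Sx : S x by apply: S_osum.
  have e1 : phi x = ((N x) ^+ 2)%:C%C.
    rewrite phi_osum NsqC // ip_osum //; apply: eq_bigr => i _.
    by rewrite /a conjCK mulrC.
  have := phiB x Sx; rewrite e1 normc_real ?exprn_ge0 ?N_ge0 // => h.
  have := N_ge0 x; nra.
have [k [Sk hk _]] := synth _ _ bd.
exists k => // v Sv.
apply/eqP; rewrite -subr_eq0; apply/eqP/Normc.eq0_normc/eqP.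
rewrite eq_le normc_ge0' andbT.
apply: (@le0_eps _ _ (`|M| + N k)); first by rewrite addr_ge0 ?N_ge0.
move=> eps e0.
have [s us hs] := expand Sv _ e0.
set b := fun i => ip v (e i).
set y := osum s b.
have Sy : S y by apply: S_osum.
have ey : phi y - ip y k = 0.
  rewrite phi_osum /y /osum ip_sumL -sumrB big1 // => i _.
  by rewrite ipZl ipC hk /a conjCK subrr.
have -> : phi v - ip v k = (phi (v - y) - ip (v - y) k) + (phi y - ip y k).
  have := phiD _ _ (SB Sv Sy) Sy; rewrite subrK => ->; rewrite ipBl; ring.
rewrite ey addr0.
apply: le_trans (le_normcD _ _) _; rewrite normcN.
have h1 := phiB _ (SB Sv Sy).
have h2 := CS (SB Sv Sy) Sk.
have h3 := N_ge0 (v - y); have h4 := N_ge0 k.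
have h5 : M * N (v - y) <= `|M| * eps.
  apply: le_trans (ler_wpM2r h3 (ler_norm M)) _.
  by rewrite ler_wpM2l // ltW.
rewrite mulrDl; apply: lerD; first exact: le_trans h1 h5.
apply: le_trans h2 _; rewrite mulrC ler_wpM2l // ltW //.
Qed.



Lemma baire (P : nat -> V -> Prop) :
  (forall y, S y -> exists n, P n y) ->
  (forall n y, S y -> ~ P n y -> exists2 r, 0 < r & forall y', S y' -> N (y' - y) < r -> ~ P n y') ->
  exists n y0 r, [/\ S y0, 0 < r & forall y, S y -> N (y - y0) < r -> P n y].
Proof.
move=> H1 H2; apply/not_existsP => H.
have H3 n y0 r : S y0 -> 0 < r -> exists y, [/\ S y, N (y - y0) < r & ~ P n y].
  move=> Sy0 r0; apply/not_existsP => Hn; apply: (H n); exists y0, r; split => // y Sy hy.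
  by apply/not_notP => nP; apply: (Hn y); split.
have step : forall kp : nat * (V * R), exists q : V * R, (S kp.2.1 /\ 0 < kp.2.2) ->
   [/\ S q.1, 0 < q.2, N (q.1 - kp.2.1) < kp.2.2 / 2, q.2 <= kp.2.2 / 2 &
       forall y', S y' -> N (y' - q.1) <= q.2 -> ~ P kp.1 y'].
  move=> [k [a r]] /=.
  have [Sa|nSa] := pselect (S a); last by exists (a, r) => -[].
  have [r0|nr0] := pselect (0 < r); last by exists (a, r) => -[].
  have [y [Sy hy nPy]] := H3 k a (r / 2) Sa (divr_gt0 r0 (ltr0Sn _ 1)).
  have [r' r'0 hr'] := H2 k y Sy nPy.
  exists (y, Num.min r' r / 2) => _ /=; split => //.
  - by rewrite divr_gt0 // lt_min r'0.
  - by rewrite ler_pM2r // ge_min lexx orbT.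
  - move=> y' Sy' hy'; apply: hr' => //; apply: le_lt_trans hy' _.
    have : Num.min r' r <= r' by rewrite ge_min lexx.
    lra.
have [f hf] := choice step.
pose fix a k := if k is k'.+1 then f (k', a k') else ((0 : V), (1 : R)).
have inv k : S (a k).1 /\ 0 < (a k).2.
  elim: k => [|k [IH1 IH2]] /=; first by split => //; apply: ltr01.
  by case: (hf (k, a k) (conj IH1 IH2)).
have [y Sy hy] : exists2 y, S y & forall j, N ((a j).1 - y) <= 2 * ((a j).2 / 2).
  apply: geom; first by move=> j; case: (inv j).
    move=> j /=; case: (hf (j, a j) (inv j)) => _ _ _ h _; lra.
  move=> j /=; case: (hf (j, a j) (inv j)) => _ _ h _ _; exact: ltW.
have [n Pn] := H1 y Sy.
case: (hf (n, a n) (inv n)) => _ _ _ _ h; apply: (h y Sy) => //.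
have := hy n.+1; rewrite /= (N_sym (proj1 (inv n.+1)) Sy).
by rewrite mulrC divfK.
Qed.

Section Op.
Variable T : V -> V.
Hypothesis hT : k_bounded_linear_on S N T.

Lemma TS {x} : S x -> S (T x). Proof. by case: hT => h _; apply: h. Qed.
Lemma TL a {x y} : S x -> S y -> T (a *: x + y) = a *: T x + T y.
Proof. by case: hT => _ [h _]; apply: h. Qed.
Lemma T0 : T 0 = 0.
Proof.
have := TL 1 S0 S0; rewrite scale1r addr0 scale1r => /eqP.
by rewrite -subr_eq0 opprD addrA subrr add0r oppr_eq0 => /eqP.
Qed.
Lemma TD {x y} : S x -> S y -> T (x + y) = T x + T y.
Proof. by move=> Sx Sy; have := TL 1 Sx Sy; rewrite !scale1r. Qed.
Lemma TZ a {x} : S x -> T (a *: x) = a *: T x.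
Proof. by move=> Sx; have := TL a Sx S0; rewrite !addr0 T0 addr0. Qed.
Lemma TN {x} : S x -> T (- x) = - T x.
Proof. by move=> Sx; rewrite -scaleN1r TZ // scaleN1r. Qed.
Lemma TB {x y} : S x -> S y -> T (x - y) = T x - T y.
Proof. by move=> Sx Sy; rewrite TD ?TN //; apply: SN. Qed.
Lemma T_osum s b : T (osum s b) = \sum_(i <- s) b i *: T (e i).
Proof.
elim: s => [|i s IH]; first by rewrite /osum !big_nil T0.
rewrite /osum !big_cons TD; last exact: S_osum.
  by rewrite TZ // -/(osum s b) IH.
exact: SZ.
Qed.

Local Notation opnset := [set r | exists2 x, S x /\ N x <= 1 & r = N (T x)].

Lemma opn0 : opnset 0.
Proof. by exists 0; [split => //; rewrite N0 ler01 | rewrite T0 N0]. Qed.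

Lemma opn_has_sup : has_sup opnset.
Proof.
split; first by exists 0; apply: opn0.
case: hT => _ [_ [c hc]]; exists `|c| => r [x [Sx Nx1] ->].
apply: le_trans (hc x Sx) _.
apply: le_trans (ler_wpM2r (N_ge0 x) (ler_norm c)) _.
by rewrite -[X in _ <= X]mulr1 ler_wpM2l.
Qed.

Lemma opn_ge0 : 0 <= k_opnorm S N T.
Proof.
exact: sup_upper_bound opn_has_sup _ opn0.
Qed.

Lemma opn_ub (c : R) : (forall x, S x -> N x <= 1 -> N (T x) <= c) -> k_opnorm S N T <= c.
Proof.
move=> h; apply: ge_sup; first by exists 0; apply: opn0.
by move=> r [x [Sx Nx] ->]; apply: h.
Qed.

Lemma opn_le {x} : S x -> N (T x) <= k_opnorm S N T * N x.
Proof.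
move=> Sx; have [x0|xn0] := eqVneq x 0.
  by rewrite x0 T0 N0 mulr0.
have Np : 0 < N x.
  rewrite lt_def N_ge0 andbT; apply/eqP => h; move: xn0; by rewrite (N_eq0 Sx h) eqxx.
set a := ((N x)^-1)%:C%C.
have na : Normc.normc a = (N x)^-1 by rewrite normc_real // invr_ge0 ltW.
have := sup_upper_bound opn_has_sup (ex_intro2 _ _ (a *: x) (conj (SZ a Sx) _) erefl).
rewrite TZ // (N_Z a Sx) (N_Z a (TS Sx)) na mulVf ?gt_eqF //.
rewrite -/(k_opnorm S N T) ler_pdivrMl // mulrC => h; apply: h; exact: lexx.
Qed.


Lemma N_le_sqrt x (r : R) : N x ^+ 2 <= r -> N x <= Num.sqrt r.
Proof.
move=> h; rewrite -[N x]ger0_norm ?N_ge0 // -sqrtr_sqr; exact: ler_wsqrtr.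
Qed.

Lemma key {x f} (Fr : R) : S x -> S f ->
  (forall s, uniq s -> \sum_(i <- s) (Normc.normc (ip f (T (e i)))) ^+ 2 <= Fr) ->
  Normc.normc (ip (T x) f) <= N x * Num.sqrt Fr.
Proof.
move=> Sx Sf hF.
set c := fun i => ip f (T (e i)).
rewrite -subr_le0; apply: (@le0_eps _ _ (k_opnorm S N T * N f)).
  by rewrite mulr_ge0 ?opn_ge0 ?N_ge0.
move=> eps e0.
have [s us hs] := expand Sx _ e0.
set b := fun i => ip x (e i).
set y := osum s b.
have Sy : S y by apply: S_osum.
have eTy : ip (T y) f = ip (osum s b) (osum s c).
  rewrite ip_osum // /y T_osum ip_sumL; apply: eq_bigr => i _.
  by rewrite ipZl -ipC.
have h1 : Normc.normc (ip (T y) f) <= N x * Num.sqrt Fr.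
  rewrite eTy; apply: le_trans (CS (S_osum _ _) (S_osum _ _)) _.
  apply: ler_pM; rewrite ?N_ge0 //.
    rewrite -(@ler_pXn2r _ 2) ?nnegrE ?N_ge0 // N_osum //.
    exact: bessel.
  by apply: N_le_sqrt; rewrite N_osum //; apply: hF.
have h2 : Normc.normc (ip (T x) f - ip (T y) f) <= k_opnorm S N T * N f * eps.
  apply: le_trans (ip_cont (TS Sx) (TS Sy) Sf) _.
  rewrite -TB // mulrAC ler_wpM2r ?N_ge0 //.
  apply: le_trans (opn_le (SB Sx Sy)) _.
  by rewrite ler_wpM2l ?opn_ge0 // ltW.
have -> : ip (T x) f = (ip (T x) f - ip (T y) f) + ip (T y) f by rewrite subrK.
have := le_normcD (ip (T x) f - ip (T y) f) (ip (T y) f).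
lra.
Qed.

Lemma upper_fin {f} s : S f -> uniq s ->
  \sum_(i <- s) (Normc.normc (ip f (T (e i)))) ^+ 2 <= k_opnorm S N T ^+ 2 * N f ^+ 2.
Proof.
move=> Sf us.
set c := fun i => ip f (T (e i)).
set x := osum s c.
have Sx : S x by apply: S_osum.
rewrite -N_osum //.
have e1 : ip (T x) f = ((N x) ^+ 2)%:C%C.
  rewrite NsqC // ip_osum // /x T_osum ip_sumL; apply: eq_bigr => i _.
  by rewrite ipZl -ipC.
have h1 := CS (TS Sx) Sf.
rewrite e1 normc_real ?exprn_ge0 ?N_ge0 // in h1.
have h2 := opn_le Sx.
have h3 := N_ge0 x; have h4 := N_ge0 f; have h5 := opn_ge0; have h6 := N_ge0 (T x).
have h7 : N x ^+ 2 <= k_opnorm S N T * N x * N f.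
  apply: le_trans h1 _; exact: ler_wpM2r.
rewrite -exprMn; set o := k_opnorm S N T in h7 h5 *.
nra.
Qed.

End Op.


Lemma bit (U Ui : V -> V) : k_bounded_linear_on S N U -> k_inverse_on S U Ui ->
  exists2 K, 0 <= K & forall y, S y -> N (Ui y) <= K * N y.
Proof.
move=> hU [UiS [UiU UUi]].
pose P (n : nat) y := forall eps : R, 0 < eps ->
  exists v, [/\ S v, N v <= n%:R & N (y - U v) < eps].
have H1 : forall y, S y -> exists n, P n y.
  move=> y Sy; exists (Num.truncn (N (Ui y))).+1 => eps e0; exists (Ui y).
  split; [exact: UiS | by apply: ltW; apply: truncnS_gt | by rewrite UUi // subrr N0].
have H2 : forall n y, S y -> ~ P n y ->
    exists2 r, 0 < r & forall y', S y' -> N (y' - y) < r -> ~ P n y'.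
  move=> n y Sy nP.
  case: (pselect (exists eps0 : R, 0 < eps0 /\ ~ exists v, [/\ S v, N v <= n%:R & N (y - U v) < eps0])) => [[eps0 [e0 hne]]|hno]; last first.
    exfalso; apply: nP => eps e0; apply/not_notP => hn; apply: hno; exists eps; split => //.
  exists (eps0 / 2); first by rewrite divr_gt0.
  move=> y' Sy' hy' Py'; apply: hne.
  have [v [Sv Nv hv]] := Py' (eps0 / 2) (divr_gt0 e0 (ltr0Sn _ 1)).
  exists v; split => //.
  apply: le_lt_trans (N_tri3 Sy Sy' (TS _ hU Sv)) _.
  rewrite (N_sym Sy Sy'); lra.
have [n [y0 [r [Sy0 r0 hP]]]] := baire P H1 H2.
have hA : forall z, S z -> N z < r -> forall eps : R, 0 < eps ->
    exists v, [/\ S v, N v <= (2 * n%:R) & N (z - U v) < eps].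
  move=> z Sz Nz eps e0.
  have e2 : 0 < eps / 2 by rewrite divr_gt0.
  have n1 : N (z + y0 - y0) < r by rewrite addrK.
  have n2 : N (y0 - y0) < r by rewrite subrr N0.
  have [v1 [Sv1 Nv1 h1]] := hP (z + y0) (SD Sz Sy0) n1 _ e2.
  have [v2 [Sv2 Nv2 h2]] := hP y0 Sy0 n2 _ e2.
  exists (v1 - v2); split; first exact: SB.
    apply: le_trans (N_B Sv1 Sv2) _; lra.
  have -> : z - U (v1 - v2) = (z + y0 - U v1) - (y0 - U v2).
    rewrite (TB _ hU Sv1 Sv2) !opprB !addrA [RHS]addrAC (addrAC (z + y0)) addrK.
    by rewrite [LHS]addrAC.
  have S1 : S (z + y0 - U v1) by apply: SB; [apply: SD|apply: (TS _ hU)].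
  have S2 : S (y0 - U v2) by apply: SB => //; apply: (TS _ hU).
  apply: le_lt_trans (N_B S1 S2) _; lra.
set K0 := 4 * n%:R / r.
have K00 : 0 <= K0 by rewrite /K0 divr_ge0 ?mulr_ge0 // ltW.
have hB : forall z, exists v, S z -> [/\ S v, N v <= K0 * N z & N (z - U v) <= N z / 2].
  move=> z; case: (pselect (S z)) => Sz; last by exists 0.
  have [z0|zn0] := eqVneq z 0.
    by exists 0 => _; rewrite z0 (T0 _ hU) subrr N0 mulr0 mul0r; split.
  have Np : 0 < N z.
    rewrite lt_def N_ge0 andbT; apply/eqP => h; move: zn0; by rewrite (N_eq0 Sz h) eqxx.
  set t := r / (2 * N z).
  have t0 : 0 < t by rewrite divr_gt0 // mulr_gt0.
  set z' := t%:C%C *: z.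
  have Sz' : S z' by apply: SZ.
  have Nz' : N z' = r / 2.
    rewrite /z' N_Z // normc_real ?ltW // /t; field; rewrite gt_eqF //.
  have n1 : N z' < r by rewrite Nz'; lra.
  have n2 : 0 < t * N z / 2 by apply: divr_gt0 => //; apply: mulr_gt0.
  have [v' [Sv' Nv' hv']] := hA z' Sz' n1 (t * N z / 2) n2.
  have ti0 : 0 <= t^-1 by rewrite invr_ge0 ltW.
  exists ((t^-1)%:C%C *: v'); move=> _; split; first exact: SZ _ Sv'.
    rewrite N_Z // (@normc_real _ _ ti0).
    rewrite /K0 /t invf_div.
    have : (2 * N z / r) * N v' <= (2 * N z / r) * (2 * n%:R).
      by rewrite ler_wpM2l // divr_ge0 ?mulr_ge0 ?ltW.
    move=> h; apply: le_trans h _; rewrite le_eqVlt; apply/orP; left; apply/eqP.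
    field; rewrite gt_eqF //.
  have ez : z - U ((t^-1)%:C%C *: v') = (t^-1)%:C%C *: (z' - U v').
    rewrite (TZ _ hU _ Sv') scalerBr /z' scalerA -rmorphM /= mulVf ?gt_eqF //.
    by rewrite scale1r.
  rewrite ez N_Z; last by apply: SB => //; apply: (TS _ hU).
  rewrite (@normc_real _ _ ti0).
  rewrite -(ler_pM2l t0) mulrA mulfV ?gt_eqF // mul1r.
  rewrite mulrA; exact: ltW.
have [g hg] := choice hB.
exists (2 * K0); first by rewrite mulr_ge0.
move=> y Sy.
pose fix st j := if j is j'.+1 then ((st j').1 - U (g (st j').1), (st j').2 + g (st j').1) else (y, (0 : V)).
have inv j : [/\ S (st j).1, S (st j).2, N (st j).1 <= N y / 2 ^+ j & (st j).1 = y - U (st j).2].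
  elim: j => [|j [IH1 IH2 IH3 IH4]] /=.
    by rewrite expr0 divr1 (T0 _ hU) subr0; split.
  have [Sg Ng hg'] := hg _ IH1.
  split.
  - by apply: SB => //; apply: (TS _ hU).
  - exact: SD.
  - apply: le_trans hg' _; rewrite exprS invfM mulrA mulrAC ler_pM2r ?invr_gt0 //.
  - by rewrite (TD _ hU IH2 Sg) opprD addrA IH4.
have Sst j : S (st j).2 by case: (inv j) => _ ? _ _.
have hd' : forall j, K0 * (N y / 2 ^+ j.+1) <= K0 * (N y / 2 ^+ j) / 2.
  move=> j; rewrite exprS invfM le_eqVlt; apply/orP; left; apply/eqP; ring.
have hu' : forall j, N ((st j.+1).2 - (st j).2) <= K0 * (N y / 2 ^+ j).
  move=> jj /=; have [S1 S2 h3 h4] := inv jj; have [Sg Ng _] := hg _ S1.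
  rewrite addrAC subrr add0r.
  apply: le_trans Ng _; rewrite ler_wpM2l //.
have [q Sq hq] := geom (fun j => (st j).2) (fun j => K0 * (N y / 2 ^+ j)) Sst hd' hu'.
have yq : y = U q.
  apply/eqP; rewrite -subr_eq0; apply/eqP/N_eq0; first by apply: SB => //; apply: (TS _ hU).
  apply: (@zero_geom _ _ (N y + 2 * k_opnorm S N U * K0 * N y)); first exact: N_ge0.
  move=> j; have [S1 S2 h3 h4] := inv j.
  have -> : y - U q = (st j).1 + U ((st j).2 - q).
    by rewrite (TB _ hU S2 Sq) h4 addrA subrK.
  apply: le_trans (N_D S1 (TS _ hU (SB S2 Sq))) _.
  have h5 := opn_le _ hU (SB S2 Sq).
  have h6 := hq j.
  have h7 := opn_ge0 _ hU.
  have h8 : k_opnorm S N U * N ((st j).2 - q) <= k_opnorm S N U * (2 * (K0 * (N y / 2 ^+ j)))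
    by rewrite ler_wpM2l.
  have -> : (N y + 2 * k_opnorm S N U * K0 * N y) / 2 ^+ j =
    N y / 2 ^+ j + k_opnorm S N U * (2 * (K0 * (N y / 2 ^+ j))) by field; rewrite expf_neq0.
  lra.
have -> : Ui y = q by rewrite yq UiU.
have := hq 0%N; rewrite /= sub0r N_N // expr0 divr1 mulrA; exact.
Qed.


Lemma Ui_blin (U Ui : V -> V) : k_bounded_linear_on S N U -> k_inverse_on S U Ui ->
  k_bounded_linear_on S N Ui.
Proof.
move=> hU hinv; have [UiS [UiU UUi]] := hinv.
split => //; split.
  move=> a x y Sx Sy.
  have S1 : S (a *: Ui x + Ui y) by apply: SL; apply: UiS.
  have -> : a *: x + y = U (a *: Ui x + Ui y).
    by rewrite (TL _ hU a (UiS _ Sx) (UiS _ Sy)) !UUi.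
  by rewrite UiU.
have [K _ hK] := bit _ _ hU hinv; by exists K.
Qed.

Hypothesis Hnt : exists2 x0, S x0 & x0 != 0.

Lemma opn_pos (T Ti : V -> V) : k_bounded_linear_on S N T -> k_bounded_linear_on S N Ti ->
  (forall x, S x -> Ti (T x) = x) -> 0 < k_opnorm S N T.
Proof.
move=> hT hTi TiT; rewrite lt_def opn_ge0 // andbT; apply/eqP => o0.
have [x0 Sx0 nz] := Hnt.
have := opn_le _ hT Sx0; rewrite o0 mul0r => h.
have T0x : T x0 = 0 by apply: N_eq0; [exact: (TS _ hT Sx0) | apply/eqP; rewrite eq_le h N_ge0].
by move: nz; rewrite -(TiT _ Sx0) T0x (T0 _ hTi) eqxx.
Qed.

Lemma g_ge0 (U : V -> V) f : forall i, 0 <= (Normc.normc (ip f (U (e i)))) ^+ 2.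
Proof. by move=> i; rewrite exprn_ge0 // normc_ge0'. Qed.

Lemma upper_es (U : V -> V) : k_bounded_linear_on S N U ->
  k_upper_bound_on S N (k_coef_sum ip (fun n => U (e n))) (k_opnorm S N U ^+ 2).
Proof.
move=> hU f Sf; rewrite /k_coef_sum /=.
apply: (@es_ub _ _ (fun i => (Normc.normc (ip f (U (e i))))^+2)) => s us; exact: upper_fin.
Qed.

Lemma lower_es (U Ui : V -> V) : k_bounded_linear_on S N U -> k_inverse_on S U Ui ->
  k_lower_bound_on S N (k_coef_sum ip (fun n => U (e n))) (k_opnorm S N Ui ^- 2).
Proof.
move=> hU hinv f Sf; have hUi := Ui_blin _ _ hU hinv; have [UiS [UiU UUi]] := hinv.
rewrite /k_coef_sum /=; apply: (@es_lb2 _ _ _ (g_ge0 U f)) => Fr hF.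
have Fr0 : 0 <= Fr by have := hF [::] erefl; rewrite big_nil.
have hk := key _ hU Fr (UiS _ Sf) Sf hF.
rewrite UUi // -(NsqC Sf) normc_real ?exprn_ge0 ?N_ge0 // in hk.
have hb := opn_le _ hUi Sf.
set o := k_opnorm S N Ui in hb *.
have o0 : 0 <= o by apply: opn_ge0.
have a0 := N_ge0 f; have q0 := sqrtr_ge0 Fr.
rewrite -(sqr_sqrtr Fr0).
have [oz|op] := eqVneq o 0; first by rewrite oz expr0n /= invr0 mul0r exprn_ge0.
have opos : 0 < o by rewrite lt_def op o0.
set q := Num.sqrt Fr in hk q0 *; set a := N f in hk hb a0 *.
have h1 : a ^+ 2 <= a * (o * q).
  have := le_trans hk (ler_wpM2r q0 hb).
  by rewrite (mulrC o) -mulrA.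
have h2 : a ^+ 2 <= (o * q) ^+ 2.
  have oq0 : 0 <= o * q by rewrite mulr_ge0.
  set p := o * q in h1 oq0 *; nra.
rewrite mulrC ler_pdivrMr ?exprn_gt0 //; by rewrite mulrC -exprMn.
Qed.

Lemma upper_opt (U Ui : V -> V) : k_bounded_linear_on S N U -> k_inverse_on S U Ui ->
  forall B, k_upper_bound_on S N (k_coef_sum ip (fun n => U (e n))) B ->
  k_opnorm S N U ^+ 2 <= B.
Proof.
move=> hU hinv B hB.
have hBf : forall f, S f -> forall s, uniq s ->
    \sum_(i <- s) (Normc.normc (ip f (U (e i)))) ^+ 2 <= B * N f ^+ 2.
  move=> f Sf s us; rewrite -lee_fin; apply: le_trans (hB f Sf).
  exact: (@es_lb _ _ (fun i => (Normc.normc (ip f (U (e i))))^+2)).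
have B0 : 0 <= B.
  have [x0 Sx0 nz] := Hnt.
  have := hBf x0 Sx0 [::] erefl; rewrite big_nil.
  have Np : 0 < N x0 ^+ 2.
    rewrite exprn_gt0 // lt_def N_ge0 andbT; apply/eqP => h; move: nz; by rewrite (N_eq0 Sx0 h) eqxx.
  by rewrite pmulr_lge0.
rewrite -(sqr_sqrtr B0) ler_pXn2r ?nnegrE ?sqrtr_ge0 ?opn_ge0 //.
apply: opn_ub => // x Sx Nx1.
set f := U x.
have Sf : S f by exact: (TS _ hU Sx).
have hk := key _ hU (B * N f ^+ 2) Sx Sf (hBf f Sf).
rewrite -(NsqC Sf) normc_real ?exprn_ge0 ?N_ge0 // in hk.
rewrite sqrtrM // sqrtr_sqr ger0_norm ?N_ge0 // in hk.
have a0 := N_ge0 f; have b0 := sqrtr_ge0 B; have x0 := N_ge0 x.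
set a := N f in hk a0 *; set b := Num.sqrt B in hk b0 *.
have h1 : a ^+ 2 <= a * (N x * b) by apply: le_trans hk _; rewrite le_eqVlt; apply/orP; left; apply/eqP; ring.
have h2 : N x * b <= b by rewrite -[X in _ <= X]mul1r ler_wpM2r.
nra.
Qed.


Lemma normc_conj (z : R[i]) : Normc.normc (z^*) = Normc.normc z.
Proof. by apply: complexI; rewrite !normcC norm_conjC. Qed.

Lemma lower_opt (U Ui : V -> V) : k_bounded_linear_on S N U -> k_inverse_on S U Ui ->
  forall A, k_lower_bound_on S N (k_coef_sum ip (fun n => U (e n))) A ->
  A <= k_opnorm S N Ui ^- 2.
Proof.
move=> hU hinv A hA.
have hUi := Ui_blin _ _ hU hinv; have [UiS [UiU UUi]] := hinv.
have opos : 0 < k_opnorm S N Ui by apply: (opn_pos _ _ hUi hU UUi).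
set o := k_opnorm S N Ui in opos *.
have [A0|Apos] := leP A 0.
  by apply: le_trans A0 _; rewrite invr_ge0 exprn_ge0 // ltW.
have claim : forall y, S y -> N y <= 1 -> N (Ui y) <= Num.sqrt A^-1.
  move=> y Sy Ny1.
  set x := Ui y.
  have Sx : S x by apply: UiS.
  have phiL : forall a v w, S v -> S w ->
      ip (Ui (a *: v + w)) x = a * ip (Ui v) x + ip (Ui w) x.
    move=> a v w Sv Sw.
    by rewrite (TL _ hUi a Sv Sw) ipL.
  have phiB : forall v, S v -> Normc.normc (ip (Ui v) x) <= o * N x * N v.
    move=> v Sv.
    apply: le_trans (CS (UiS _ Sv) Sx) _.
    have := opn_le _ hUi Sv; rewrite -/o => h.
    apply: le_trans (ler_wpM2r (N_ge0 x) h) _.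
    by rewrite mulrAC.
  have [k Sk hk] := riesz _ _ phiL phiB.
  have bdk : forall s, uniq s -> \sum_(i <- s) (Normc.normc (ip k (U (e i)))) ^+ 2 <= N x ^+ 2.
    move=> s us; apply: le_trans (bessel _ _ Sx us); rewrite le_eqVlt; apply/orP; left; apply/eqP.
    apply: eq_bigr => i _.
    rewrite ipC normc_conj -hk; last by apply: (TS _ hU).
    by rewrite UiU // ipC normc_conj.
  have h1 : A * N k ^+ 2 <= N x ^+ 2.
    rewrite -lee_fin; apply: le_trans (hA k Sk) _.
    rewrite /k_coef_sum /=.
    exact: (@es_ub _ _ (fun i => (Normc.normc (ip k (U (e i))))^+2)).
  have h2 : N x ^+ 2 <= N k.
    have := CS Sy Sk; rewrite -hk // -/x -(NsqC Sx) normc_real ?exprn_ge0 ?N_ge0 //.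
    move=> h; apply: le_trans h _; rewrite -[X in _ <= X]mul1r ler_wpM2r ?N_ge0 //.
  apply: N_le_sqrt.
  have nk0 := N_ge0 k; have nx0 : 0 <= N x ^+ 2 by rewrite exprn_ge0 ?N_ge0.
  have h3 : (A * N k) ^+ 2 <= A * N k.
    have e1 : (A * N k) ^+ 2 = A * (A * N k ^+ 2) by rewrite exprMn expr2 mulrA.
    rewrite e1; apply: ler_wpM2l; first exact: ltW.
    exact: le_trans h1 h2.
  have h4 : A * N k <= 1.
    set t := A * N k in h3 *; have t0 : 0 <= t by rewrite mulr_ge0 // ltW.
    nra.
  have h5 : A * N x ^+ 2 <= 1.
    apply: le_trans h4; apply: ler_wpM2l => //; exact: ltW.
  by rewrite -(ler_pM2l Apos) mulrV ?unitfE ?gt_eqF.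
have ho : o <= Num.sqrt A^-1 by apply: opn_ub.
have hAi : 0 < A^-1 by rewrite invr_gt0.
have ho2 : o ^+ 2 <= A^-1.
  rewrite -(sqr_sqrtr (ltW hAi)) ler_pXn2r ?nnegrE ?sqrtr_ge0 // ltW //.
rewrite -[A]invrK ler_pV2 ?inE ?unitfE ?exprn_gt0 ?gt_eqF ?invr_gt0 //.
exact: exprn_gt0.
Qed.


Lemma gen_main (U Ui : V -> V) : k_bounded_linear_on S N U -> k_inverse_on S U Ui ->
  let FS := k_coef_sum ip (fun n => U (e n)) in
  [/\ 0 < k_opnorm S N Ui ^- 2, 0 < k_opnorm S N U ^+ 2,
   k_lower_bound_on S N FS (k_opnorm S N Ui ^- 2) /\
     (forall A, k_lower_bound_on S N FS A -> A <= k_opnorm S N Ui ^- 2) &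
   k_upper_bound_on S N FS (k_opnorm S N U ^+ 2) /\
     (forall B, k_upper_bound_on S N FS B -> k_opnorm S N U ^+ 2 <= B)].
Proof.
move=> hU hinv FS.
have hUi := Ui_blin _ _ hU hinv; have [UiS [UiU UUi]] := hinv.
split.
- by rewrite invr_gt0 exprn_gt0 // (opn_pos _ _ hUi hU UUi).
- by rewrite exprn_gt0 // (opn_pos _ _ hU hUi UiU).
- split; [exact: (lower_es _ _ hU hinv) | exact: (lower_opt _ _ hU hinv)].
- split; [exact: (upper_es _ hU) | exact: (upper_opt _ _ hU hinv)].
Qed.

End Gen.

Lemma kn_neg (R : realType) (V : lmodType R[i]) (form : V -> V -> R[i]) :
  k_norm (fun x y => - form x y) = k_norm form.
Proof. by apply: funext => x; rewrite /k_norm normcN. Qed.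

Lemma kc_neg (R : realType) (V : lmodType R[i]) (form : V -> V -> R[i]) (I : choiceType) (g : I -> V) :
  k_coef_sum (fun x y => - form x y) g = k_coef_sum form g.
Proof.
apply: funext => f; rewrite /k_coef_sum; congr esum; apply: funext => n.
by rewrite normcN.
Qed.

Theorem theorem3p4 (R : realType) (V : lmodType R[i]) (form : V -> V -> R[i])
  (Kp Km : set V) (Ip Im : choiceType) (ep : Ip -> V) (em : Im -> V)
  (Up Um Upi Umi : V -> V) :
  k_krein_space form Kp Km ->
  k_orthonormal_basis Kp form ep ->
  k_orthonormal_basis Km (fun x y => - form x y) em ->
  k_bounded_linear_on Kp (k_norm form) Up -> k_bijective_on Kp Up ->
  k_bounded_linear_on Km (k_norm form) Um -> k_bijective_on Km Um ->
  k_inverse_on Kp Up Upi -> k_inverse_on Km Um Umi ->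
  let fp := fun n => Up (ep n) in
  let fm := fun n => Um (em n) in
  (exists A B A' B' : R, [/\ 0 < A, 0 < B, 0 < A' & 0 < B'] /\
     (forall f, Kp f ->
        ((A * k_norm form f ^+ 2)%:E <= k_coef_sum form fp f)%E /\
        (k_coef_sum form fp f <= (B * k_norm form f ^+ 2)%:E)%E) /\
     (forall f, Km f ->
        ((A' * k_norm form f ^+ 2)%:E <= k_coef_sum form fm f)%E /\
        (k_coef_sum form fm f <= (B' * k_norm form f ^+ 2)%:E)%E)) /\
  (* largest possible A is 1 / ||(U+)^-1||^2 *)
  (k_lower_bound_on Kp (k_norm form) (k_coef_sum form fp)
      ((k_opnorm Kp (k_norm form) Upi) ^- 2) /\
   forall A, k_lower_bound_on Kp (k_norm form) (k_coef_sum form fp) A ->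
      A <= (k_opnorm Kp (k_norm form) Upi) ^- 2) /\
  (* largest possible A' is 1 / ||(U-)^-1||^2 *)
  (k_lower_bound_on Km (k_norm form) (k_coef_sum form fm)
      ((k_opnorm Km (k_norm form) Umi) ^- 2) /\
   forall A', k_lower_bound_on Km (k_norm form) (k_coef_sum form fm) A' ->
      A' <= (k_opnorm Km (k_norm form) Umi) ^- 2) /\
  (* smallest possible B is ||U+||^2 *)
  (k_upper_bound_on Kp (k_norm form) (k_coef_sum form fp)
      ((k_opnorm Kp (k_norm form) Up) ^+ 2) /\
   forall B, k_upper_bound_on Kp (k_norm form) (k_coef_sum form fp) B ->
      (k_opnorm Kp (k_norm form) Up) ^+ 2 <= B) /\
  (* smallest possible B' is ||U-||^2 *)
  (k_upper_bound_on Km (k_norm form) (k_coef_sum form fm)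
      ((k_opnorm Km (k_norm form) Um) ^+ 2) /\
   forall B', k_upper_bound_on Km (k_norm form) (k_coef_sum form fm) B' ->
      (k_opnorm Km (k_norm form) Um) ^+ 2 <= B').
Proof.
move=> hK honp honm hUp bUp hUm bUm hinvp hinvm fp fm.
have [[hL hC] [_ [_ [_ [[[Sp0 SpL] [Sppos Spcomp]] [[[Sm0 SmL] [Smpos Smcomp]] [ntp ntm]]]]]]] := hK.
have [onp1 [onp2 onp3]] := honp.
have [onm1 [onm2 onm3]] := honm.
have Gp := gen_main _ _ _ _ hL hC Sp0 SpL Sppos _ _ onp1 onp2 onp3 Spcomp ntp _ _ hUp hinvp.
have hL' : forall (a : R[i]) (x y z : V),
    - form (a *: x + y) z = a * (- form x z) + (- form y z).
  by move=> a x y z; rewrite hL; ring.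
have hC' : forall x y : V, - form y x = (- form x y)^*.
  by move=> x y; rewrite hC rmorphN.
rewrite -(@kn_neg _ _ form) in hUm.
have Gm := gen_main _ _ _ _ hL' hC' Sm0 SmL Smpos _ _ onm1 onm2 onm3 Smcomp ntm _ _ hUm hinvm.
rewrite /= !kn_neg !kc_neg in Gm.
rewrite /= in Gp.
have [Ap Bp [lA oA] [uB oB]] := Gp.
have [Am Bm [lA' oA'] [uB' oB']] := Gm.
split.
  exists (k_opnorm Kp (k_norm form) Upi ^- 2), (k_opnorm Kp (k_norm form) Up ^+ 2),
    (k_opnorm Km (k_norm form) Umi ^- 2), (k_opnorm Km (k_norm form) Um ^+ 2).
  split; first by split.
  split.
    by move=> f Sf; split; [exact: lA | exact: uB].
  by move=> f Sf; split; [exact: lA' | exact: uB'].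
split; first by split.
split; first by split.
split; first by split.
by split.
Qed.
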